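(* For every $s \in \mathcal{S}$, $r(s) \equiv s(0) \pmod 2$.
   Context: For a step function $s$ on $[0,\tfrac12)$ let $J_s(t)=\tfrac12(\lim_{\tau\downarrow t}s(\tau)-\lim_{\tau\uparrow t}s(\tau))$. A Laurent polynomial $\delta\in\mathbf{Q}[t,t^{-1}]$ is symmetric if $\delta(t^{-1})=\delta(t)$. $\mathcal{S}$ is the set of integer-valued step functions $s$ on $[0,\tfrac12)$ such that: (1) $s$ has finitely many discontinuities and is continuous at $0$; (2) for all $t$, $s(t)=\tfrac12(\lim_{\tau\downarrow t}s(\tau)+\lim_{\tau\uparrow t}s(\tau))$; (3) $J_s(t)\in\mathbf{Z}$ for all $t$; (4) if $J_s(t)\neq0$ then $e^{2\pi i t}$ is a root of an irreducible symmetric rational polynomial; (5) if $\delta(e^{2\pi i\alpha_1})=\delta(e^{2\pi i\alpha_2})=0$ for some symmetric irreducible rational polynomial $\delta$, then $J_s(\alpha_1)\equiv J_s(\alpha_2)\pmod 2$. For $s\in\mathcal{S}$: $T_s=\{t: J_s(t)\neq0\}$; $T_{s,\delta}=\{t\in T_s:\delta(e^{2\pi i t})=0\}$; $r_\delta(s)=\max_{t\in T_{s,\delta}}|s(t)|+\max_{t\in T_{s,\delta}}|J_s(t)|$ (for $T_{s,\delta}\ne\emptyset$); $r(s)=\max\big(\{r_\delta(s)\}_\delta\cup\{s(0)\}\big)$. *)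

(* Defs.v *)
From HB Require Import structures.
From mathcomp Require Import all_boot all_order all_algebra.
From mathcomp Require Import all_classical all_reals all_analysis.
From mathcomp Require Import complex.
Set Implicit Arguments. Unset Strict Implicit. Unset Printing Implicit Defensive.
Import Order.TTheory GRing.Theory Num.Theory.
Import numFieldNormedType.Exports.
Local Open Scope classical_set_scope.
Local Open Scope ring_scope.

Definition laurent := (nat * {poly rat})%type.
Definition lp_eq (d e : laurent) : Prop := d.2 * 'X^(e.1) = e.2 * 'X^(d.1).
Definition lp_mul (d e : laurent) : laurent := ((d.1 + e.1)%N, d.2 * e.2).
Definition lp_inv (d : laurent) : laurent :=
  ((size d.2).-1, 'X^(d.1) * \poly_(i < size d.2) d.2`_((size d.2).-1 - i)).
Definition lp_symmetric (d : laurent) : Prop := lp_eq (lp_inv d) d.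
Definition lp_unit (d : laurent) : Prop :=
  exists (c : rat) (m : nat), c != 0 /\ d.2 = c *: 'X^m.
Definition lp_irreducible (d : laurent) : Prop :=
  d.2 != 0 /\ ~ lp_unit d /\
  forall a b : laurent, lp_eq d (lp_mul a b) -> lp_unit a \/ lp_unit b.
Definition lp_eval (R : realType) (d : laurent) (z : complex.complex R) : complex.complex R :=
  (map_poly ratr d.2).[z] / z ^+ (d.1).
Definition expi2pi (R : realType) (t : R) : complex.complex R :=
  complex.Complex (cos (2 * pi * t)) (sin (2 * pi * t)).

Definition rlimit (R : realType) (s : R -> R) (t : R) : R := lim (s x @[x --> t^'+]).
Definition llimit (R : realType) (s : R -> R) (t : R) : R := lim (s x @[x --> t^'-]).
Definition J (R : realType) (s : R -> R) (t : R) : R := (rlimit s t - llimit s t) / 2.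

Definition is_integer (R : realType) (x : R) : Prop := exists z : int, x = z%:~R.
Definition congr_mod2 (R : realType) (x y : R) : Prop :=
  exists k : int, x - y = (2 * k)%:~R.

Definition is_step_function (R : realType) (s : R -> R) : Prop :=
  exists a : seq R,
    let b := 0 :: rcons a (1 / 2) in
    sorted <%R b /\
    forall i : nat, (i.+1 < size b)%N ->
      forall x y : R, b`_i < x < b`_i.+1 -> b`_i < y < b`_i.+1 -> s x = s y.

Definition sym_irred (d : laurent) : Prop := lp_symmetric d /\ lp_irreducible d.

Definition in_S (R : realType) (s : R -> R) : Prop :=
  [/\ is_step_function s /\ (forall t : R, 0 <= t < 1 / 2 -> is_integer (s t))
        /\ (s x @[x --> 0^'+] --> s 0),
      (forall t : R, 0 < t < 1 / 2 -> s t = (rlimit s t + llimit s t) / 2),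
      (forall t : R, 0 < t < 1 / 2 -> is_integer (J s t)),
      (forall t : R, 0 < t < 1 / 2 -> J s t != 0 ->
                   exists d : laurent, sym_irred d /\ lp_eval d (expi2pi t) = 0) &
      (forall (d : laurent) (a1 a2 : R), sym_irred d ->
                   0 < a1 < 1 / 2 -> 0 < a2 < 1 / 2 ->
                   lp_eval d (expi2pi a1) = 0 -> lp_eval d (expi2pi a2) = 0 ->
                   congr_mod2 (J s a1) (J s a2))].

Definition T_s (R : realType) (s : R -> R) : set R :=
  [set t | 0 < t < 1 / 2 /\ J s t != 0].
Definition T_sd (R : realType) (s : R -> R) (d : laurent) : set R :=
  [set t | T_s s t /\ lp_eval d (expi2pi t) = 0].

(* r_delta(s) = max_{t in T_{s,delta}} |s(t)| + max_{t in T_{s,delta}} |J_s(t)|;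
   the maxima are over finite sets, rendered as suprema *)
Definition r_delta (R : realType) (s : R -> R) (d : laurent) : R :=
  sup [set `|s t| | t in T_sd s d] + sup [set `|J s t| | t in T_sd s d].

Definition r_of (R : realType) (s : R -> R) : R :=
  sup ([set r_delta s d | d in [set d | sym_irred d /\ T_sd s d !=set0]]
       `|` [set s 0]).

(* Main.v *)
Require Import Defs.
From HB Require Import structures.
From mathcomp Require Import all_boot all_order all_algebra.
From mathcomp Require Import all_classical all_reals all_analysis.
From mathcomp Require Import complex.
From mathcomp Require Import lra.
Import Order.TTheory GRing.Theory Num.Theory.
Import numFieldNormedType.Exports.
Local Open Scope classical_set_scope.
Local Open Scope ring_scope.

Lemma sup_max_eq (R : realType) (E : set R) (m : R) :
  E m -> (forall x, E x -> x <= m) -> sup E = m.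
Proof.
move=> Em ub; apply/le_anti/andP; split.
  by apply: ge_sup; [exists m | move=> x /ub].
by apply: (ub_le_sup); [exists m => x /ub|].
Qed.

Lemma finite_max (R : realType) (l : seq R) (E : set R) :
  E !=set0 -> E `<=` [set x | x \in l] ->
  exists m, E m /\ forall x, E x -> x <= m.
Proof.
elim: l E => [|y l IH] E [e Ee] sub.
  by move: (sub e Ee); rewrite /= in_nil.
have [[e' [E'e' e'l]]|] := pselect ((E `&` [set x | x \in l]) !=set0).
  have [m [[Em ml] mub]] := IH (E `&` [set x | x \in l]) (ex_intro _ e' (conj E'e' e'l)) (fun x H => H.2).
  have [Ey|nEy] := pselect (E y).
    have [ym|my] := leP y m.
      exists m; split => // x Ex.
      have := sub x Ex; rewrite /= inE => /orP[/eqP->//|xl].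
      exact: mub.
    exists y; split => // x Ex.
    have := sub x Ex; rewrite /= inE => /orP[/eqP->//|xl].
    exact: (le_trans (mub x (conj Ex xl)) (ltW my)).
  exists m; split => // x Ex.
  have := sub x Ex; rewrite /= inE => /orP[/eqP xy|xl]; first by rewrite xy in Ex.
  exact: mub.
move=> nE.
have Eonly : forall x, E x -> x = y.
  move=> x Ex; have := sub x Ex; rewrite /= inE => /orP[/eqP//|xl].
  by exfalso; apply: nE; exists x.
exists y; split; first by rewrite -(Eonly e Ee).
by move=> x /Eonly ->.
Qed.

Set Implicit Arguments. Unset Strict Implicit.

Definition bpts (R : realType) (a : seq R) : seq R := 0 :: rcons a (1/2).

Lemma bpts_size (R : realType) (a : seq R) : size (bpts a) = (size a).+2.
Proof. by rewrite /bpts /= size_rcons. Qed.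

Lemma bpts_last (R : realType) (a : seq R) : (bpts a)`_(size a).+1 = 1/2.
Proof. by rewrite /bpts /= nth_rcons ltnn eqxx. Qed.

Lemma bpts_mono (R : realType) (a : seq R) i j :
  sorted <%R (bpts a) -> (i < j)%N -> (j < size (bpts a))%N -> (bpts a)`_i < (bpts a)`_j.
Proof.
move=> Hs ij js.
have := sorted_ltn_nth (@lt_trans _ R) 0 Hs.
apply => //; rewrite inE //.
exact: ltn_trans ij js.
Qed.

Lemma idx_right (R : realType) (a : seq R) (t : R) :
  sorted <%R (bpts a) -> 0 <= t < 1/2 ->
  exists i, (i.+1 < size (bpts a))%N /\ (bpts a)`_i <= t < (bpts a)`_i.+1.
Proof.
move=> Hs /andP[t0 th].
set b := bpts a.
have hb : has (fun x => t < x) b.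
  apply/hasP; exists (1/2) => //.
  by rewrite /b /bpts inE mem_rcons inE eqxx orbT.
have k_lt := hb; rewrite has_find in k_lt.
have tk := nth_find 0 hb.
set k := find _ _ in k_lt tk.
have k0 : (0 < k)%N.
  rewrite lt0n; apply/negP => /eqP k0; move: tk; rewrite k0 /b /bpts /=.
  by rewrite ltNge t0.
exists k.-1; rewrite prednK //; split => //.
rewrite tk andbT.
have hk : (k.-1 < k)%N by rewrite ltn_predL.
have := before_find 0 hk.
by move/negbT; rewrite -leNgt.
Qed.

Lemma idx_left (R : realType) (a : seq R) (t : R) :
  sorted <%R (bpts a) -> 0 < t < 1/2 ->
  exists i, (i.+1 < size (bpts a))%N /\ (bpts a)`_i < t <= (bpts a)`_i.+1.
Proof.
move=> Hs /andP[t0 th].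
set b := bpts a.
have hb : has (fun x => t <= x) b.
  apply/hasP; exists (1/2); last exact: ltW.
  by rewrite /b /bpts inE mem_rcons inE eqxx orbT.
have k_lt := hb; rewrite has_find in k_lt.
have tk := nth_find 0 hb.
set k := find _ _ in k_lt tk.
have k0 : (0 < k)%N.
  rewrite lt0n; apply/negP => /eqP k0; move: tk; rewrite k0 /b /bpts /=.
  by rewrite leNgt t0.
exists k.-1; rewrite prednK //; split => //.
rewrite tk andbT.
have hk : (k.-1 < k)%N by rewrite ltn_predL.
have := before_find 0 hk.
by move/negbT; rewrite -ltNge.
Qed.

Definition stepc (R : realType) (s : R -> R) (b : seq R) :=
  forall i : nat, (i.+1 < size b)%N ->
      forall x y : R, b`_i < x < b`_i.+1 -> b`_i < y < b`_i.+1 -> s x = s y.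

Lemma rlim_val (R : realType) (s : R -> R) (b : seq R) i t x :
  stepc s b -> (i.+1 < size b)%N -> b`_i <= t < b`_i.+1 -> b`_i < x < b`_i.+1 ->
  rlimit s t = s x.
Proof.
move=> Hc Hi /andP[it ti] Hx.
rewrite /rlimit; apply: norm_lim_near_cst.
near=> y; apply: (Hc i Hi y x) => //; apply/andP; split.
  by apply: le_lt_trans it _; near: y; exact: nbhs_right_gt.
by near: y; exact: nbhs_right_lt.
Unshelve. all: by end_near.
Qed.

Lemma llim_val (R : realType) (s : R -> R) (b : seq R) i t x :
  stepc s b -> (i.+1 < size b)%N -> b`_i < t <= b`_i.+1 -> b`_i < x < b`_i.+1 ->
  llimit s t = s x.
Proof.
move=> Hc Hi /andP[it ti] Hx.
rewrite /llimit; apply: norm_lim_near_cst.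
near=> y; apply: (Hc i Hi y x) => //; apply/andP; split.
  by near: y; exact: nbhs_left_gt.
by apply: lt_le_trans ti; near: y; exact: nbhs_left_lt.
Unshelve. all: by end_near.
Qed.


Lemma mid_in (R : realType) (b : seq R) i :
  b`_i < b`_i.+1 -> b`_i < (b`_i + b`_i.+1) / 2 < b`_i.+1.
Proof. by move=> h; have [h1 h2] := midf_lt h; rewrite h1 h2. Qed.

Lemma parity_int (R : realType) (s : R -> R) (a : seq R) :
  sorted <%R (bpts a) -> stepc s (bpts a) ->
  (s x @[x --> (0:R)^'+] --> s 0)%classic ->
  (forall t : R, 0 < t < 1 / 2 -> is_integer (J s t)) ->
  forall i, (i.+1 < size (bpts a))%N -> forall x, (bpts a)`_i < x < (bpts a)`_i.+1 ->
  congr_mod2 (s x) (s 0).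
Proof.
move=> Hs Hc H0 HJ.
set b := bpts a.
elim=> [|i IH] Hi x Hx.
  exists 0; rewrite mulr0 /=.
  have Hx0 : b`_0 <= 0 < b`_1.
    move: Hx; rewrite /b /bpts /= lexx /= => /andP[h1 h2]; exact: lt_trans h1 h2.
  rewrite -(@rlim_val R s b 0 0 x Hc Hi Hx0 Hx).
  rewrite /rlimit (norm_cvg_lim H0); lra.
have Hi' : (i.+1 < size b)%N by apply: ltn_trans Hi.
have lt1 : b`_i < b`_i.+1 by apply: bpts_mono.
have lt2 : b`_i.+1 < b`_i.+2 by apply: bpts_mono.
set m := (b`_i + b`_i.+1) / 2.
set m' := (b`_i.+1 + b`_i.+2) / 2.
have Hm : b`_i < m < b`_i.+1 by exact: mid_in.
have Hm' : b`_i.+1 < m' < b`_i.+2 by exact: mid_in.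
have [k Hk] := IH Hi' m Hm.
set t := b`_i.+1.
have t0 : 0 < t.
  have := @bpts_mono R a 0 i.+1 Hs isT Hi'; by rewrite /t /b /bpts /=.
have th : t < 1/2.
  have := @bpts_mono R a i.+1 (size a).+1 Hs.
  rewrite bpts_last bpts_size; apply => //.
  by move: Hi; rewrite /b bpts_size.
have [z Hz] := HJ t (andb_true_intro (conj t0 th)).
have el : llimit s t = s m.
  apply: (@llim_val R s b i t m Hc Hi') => //; by rewrite lt1 lexx.
have er : rlimit s t = s m'.
  apply: (@rlim_val R s b i.+1 t m' Hc Hi) => //; by rewrite lexx lt2.
have ex : s x = s m' by apply: (Hc i.+1 Hi).
exists (z + k).
move: Hz; rewrite /J el er => Hz.
rewrite ex intrM intrD; move: Hk; rewrite intrM => Hk.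
lra.
Qed.

Lemma Ts_in_b (R : realType) (s : R -> R) (a : seq R) t :
  sorted <%R (bpts a) -> stepc s (bpts a) -> 0 < t < 1/2 -> J s t != 0 ->
  t \in bpts a.
Proof.
move=> Hs Hc /andP[t0 th] Jn.
have t0' : 0 <= t < 1/2 by rewrite (ltW t0) th.
have [i [Hi /andP[it ti]]] := idx_right Hs t0'.
have lt1 : (bpts a)`_i < (bpts a)`_i.+1 by apply: bpts_mono.
move: it; rewrite le_eqVlt => /orP[/eqP <-|it]; first exact: mem_nth (ltn_trans _ Hi).
have Hm := mid_in lt1.
have el := @llim_val R s _ i t _ Hc Hi (_ : _ < t <= _) Hm.
have er := @rlim_val R s _ i t _ Hc Hi (_ : _ <= t < _) Hm.
move: Jn; rewrite /J el ?it ?(ltW it) ?(ltW ti) ?ti // er ?(ltW it) ?ti //.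
by rewrite subrr mul0r eqxx.
Qed.

Lemma st_congr (R : realType) (s : R -> R) (a : seq R) t :
  sorted <%R (bpts a) -> stepc s (bpts a) ->
  (s x @[x --> (0:R)^'+] --> s 0)%classic ->
  (forall t : R, 0 < t < 1 / 2 -> s t = (rlimit s t + llimit s t) / 2) ->
  (forall t : R, 0 < t < 1 / 2 -> is_integer (J s t)) ->
  0 < t < 1/2 -> congr_mod2 (s t) (s 0 + J s t).
Proof.
move=> Hs Hc H0 H2 HJ Ht.
have [j [Hj Hjt]] := idx_left Hs Ht.
have lt1 : (bpts a)`_j < (bpts a)`_j.+1 by apply: bpts_mono.
have Hm := mid_in lt1.
have el := @llim_val R s _ j t _ Hc Hj Hjt Hm.
have [k Hk] := parity_int Hs Hc H0 HJ Hj Hm.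
exists k; rewrite -Hk H2 // /J el; lra.
Qed.

Lemma cm2_abs (R : realType) (x : R) : is_integer x -> congr_mod2 `|x| x.
Proof.
move=> [z ->]; have [h|h] := leP 0 (z%:~R : R).
  by exists 0; rewrite ger0_norm // mulr0 subrr.
exists (- z); rewrite ltr0_norm // intrM intrN; lra.
Qed.

Lemma cm2_add (R : realType) (x y u v : R) :
  congr_mod2 x y -> congr_mod2 u v -> congr_mod2 (x + u) (y + v).
Proof.
move=> [k Hk] [l Hl]; exists (k + l).
rewrite intrM intrD; move: Hk Hl; rewrite !intrM; lra.
Qed.

Lemma cm2_trans (R : realType) (x y z : R) :
  congr_mod2 x y -> congr_mod2 y z -> congr_mod2 x z.
Proof.
move=> [k Hk] [l Hl]; exists (k + l).
rewrite intrM intrD; move: Hk Hl; rewrite !intrM; lra.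
Qed.

Lemma cm2_sym (R : realType) (x y : R) : congr_mod2 x y -> congr_mod2 y x.
Proof. move=> [k Hk]; exists (- k); rewrite intrM intrN; move: Hk; rewrite intrM; lra. Qed.

Lemma cm2_refl (R : realType) (x : R) : congr_mod2 x x.
Proof. by exists 0; rewrite mulr0 subrr. Qed.

Lemma cm2_double (R : realType) (x y : R) : is_integer y -> congr_mod2 (x + y + y) x.
Proof. move=> [z ->]; exists z; rewrite intrM; lra. Qed.

Lemma sup_img_attained (R : realType) (T : set R) (f : R -> R) (l : seq R) :
  T !=set0 -> (forall t, T t -> t \in l) ->
  exists t, T t /\ sup [set f t | t in T] = f t.
Proof.
move=> [t0 Tt0] Hl.
have sub : [set f t | t in T] `<=` [set x | x \in [seq f x | x <- l]].
  move=> y [t Tt <-]; exact: map_f (Hl t Tt).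
have ne : [set f t | t in T] !=set0 by exists (f t0), t0.
have [m [Em mub]] := @finite_max R _ _ ne sub.
case: (Em) => t Tt et.
by exists t; split => //; rewrite et; exact: sup_max_eq.
Qed.

Lemma rdelta_form (R : realType) (s : R -> R) (l : seq R) d :
  (forall t, T_s s t -> t \in l) -> T_sd s d !=set0 ->
  exists t1 t2, T_sd s d t1 /\ T_sd s d t2 /\ r_delta s d = `|s t1| + `|J s t2|.
Proof.
move=> Hb Hne.
have Hl : forall t, T_sd s d t -> t \in l by move=> t [Tt _]; exact: Hb.
have [t1 [T1 e1]] := sup_img_attained (fun t => `|s t|) Hne Hl.
have [t2 [T2 e2]] := sup_img_attained (fun t => `|J s t|) Hne Hl.
by exists t1, t2; rewrite /r_delta e1 e2.
Qed.

Theorem mainTheorem3 (R : realType) (s : R -> R) :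
  in_S s -> congr_mod2 (r_of s) (s 0).
Proof.
case=> [[[a [Hs Hc]] [Hint H0]] H2 H3 H4 H5].
have Hs' : sorted <%R (bpts a) := Hs.
have Hc' : stepc s (bpts a) := Hc.
have Hb : forall t, T_s s t -> t \in bpts a.
  by move=> t [Ht Jn]; exact: Ts_in_b Hs' Hc' Ht Jn.
rewrite /r_of; set E := _ `|` _.
have ne : E !=set0 by exists (s 0); right.
have sub : E `<=` [set x | x \in s 0 :: [seq `|s x| + `|J s y| | x <- bpts a, y <- bpts a]].
  move=> y [[d [_ Hne] <-]|->]; last by rewrite /= inE eqxx.
  have [t1 [t2 [[T1 _] [[T2 _] ->]]]] := rdelta_form (d:=d) Hb Hne.
  rewrite /= inE; apply/orP; right.
  have := @allpairs_f _ _ _ (fun x y => `|s x| + `|J s y|) (bpts a) (bpts a) t1 t2 (Hb _ T1) (Hb _ T2).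
  exact.
have [m [Em mub]] := @finite_max R _ _ ne sub.
rewrite (@sup_max_eq R _ _ Em mub).
case: Em => [[d [Hd Hne] <-]|->]; last exact: cm2_refl.
have [t1 [t2 [[[T1 J1] e1] [[[T2 J2] e2] ->]]]] := rdelta_form (d:=d) Hb Hne.
apply: (cm2_trans (cm2_add (cm2_abs (Hint t1 _)) (cm2_abs (H3 t2 T2)))).
  by case/andP: T1 => h1 h2; rewrite (ltW h1) h2.
apply: (cm2_trans (cm2_add (st_congr Hs' Hc' H0 H2 H3 T1) (H5 d t2 t1 Hd T2 T1 e2 e1))).
exact: cm2_double (H3 t1 T1).
Qed.
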